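(* Let $G$ be a connected graph of order $n$, and let $g$ be a non-negative integer with $0\leq g\leq \min\left\{\Delta(G),\left\lfloor \frac{n-3}{2}\right\rfloor\right\}$, such that $G$ has a $g$-good-neighbor cut. Then $$\kappa(G)\leq \kappa^g(G)\leq n-2g-2.$$ Moreover, the upper and lower bounds are sharp (each is attained with equality by some such graph and $g$).
   Context: For a connected graph $G=(V,E)$ and integer $g\ge0$: a set $F\subseteq V$ is a $g$-good-neighbor faulty set if $|N(v)\cap (V-F)|\geq g$ for every $v\in V-F$; a $g$-good-neighbor cut is such an $F$ with $G-F$ disconnected; $\kappa^g(G)$ is the minimum cardinality of a $g$-good-neighbor cut. $\kappa(G)$ is the usual vertex connectivity, $\Delta(G)$ the maximum degree. *)

(* Defs.v *)
From mathcomp Require Import all_boot.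
Set Implicit Arguments. Unset Strict Implicit. Unset Printing Implicit Defensive.

Section Graphs.
Variable T : finType.
Variable e : rel T.

Definition simple_graph : Prop := symmetric e /\ irreflexive e.

Definition connected_graph : Prop := forall x y : T, connect e x y.

Definition nbhd (v : T) : {set T} := [set u | e v u].

Definition maxdeg : nat := \max_(v : T) #|nbhd v|.

Definition del_rel (F : {set T}) : rel T :=
  fun x y => [&& x \notin F, y \notin F & e x y].

Definition disconnected_after (F : {set T}) : bool :=
  [exists x, exists y, [&& x \notin F, y \notin F & ~~ connect (del_rel F) x y]].

Definition good_neighbor_faulty (g : nat) (F : {set T}) : bool :=
  [forall v, (v \notin F) ==> (g <= #|nbhd v :&: ~: F|)].

Definition good_neighbor_cut (g : nat) (F : {set T}) : bool :=
  good_neighbor_faulty g F && disconnected_after F.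

(* kappa^g(G): minimum size of a g-good-neighbor cut
   (default #|T| if there is none; only used when one exists) *)
Definition kappa_g (g : nat) : nat :=
  \big[minn/#|T|]_(F : {set T} | good_neighbor_cut g F) #|F|.

(* kappa(G): usual vertex connectivity; minimum size of a vertex cut,
   and n - 1 if there is none (complete graph convention) *)
Definition kappa : nat :=
  \big[minn/#|T|.-1]_(F : {set T} | disconnected_after F) #|F|.

Definition prop21_hyp (g : nat) : Prop :=
  [/\ simple_graph, connected_graph,
      g <= minn maxdeg ((#|T| - 3)./2)
    & exists F : {set T}, good_neighbor_cut g F].

End Graphs.

(* Main.v *)
Require Import Defs.
From mathcomp Require Import all_boot.
From mathcomp Require Import zify.

Lemma bigmin_le_seq (I : eqType) (s : seq I) (P : pred I) (f : I -> nat) d i :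
  i \in s -> P i -> \big[minn/d]_(j <- s | P j) f j <= f i.
Proof.
elim: s => // x s IH; rewrite in_cons big_cons => /orP [/eqP <- Pi | ins Pi].
  by rewrite Pi geq_minl.
case: ifP => _; last exact: IH.
exact: leq_trans (geq_minr _ _) (IH ins Pi).
Qed.

Lemma bigmin_le (I : finType) (P : pred I) (f : I -> nat) d i :
  P i -> \big[minn/d]_(j | P j) f j <= f i.
Proof. by apply: bigmin_le_seq; rewrite mem_index_enum. Qed.

Lemma bigmin_ge (I : finType) (P : pred I) (f : I -> nat) d k :
  k <= d -> (forall i, P i -> k <= f i) -> k <= \big[minn/d]_(j | P j) f j.
Proof.
move=> kd kf; apply: (big_ind (fun m => k <= m)) => //.
by move=> a b ka kb; rewrite leq_min ka kb.
Qed.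

Section Upper.
Variable T : finType.
Variable e : rel T.
Hypothesis sym : symmetric e.
Hypothesis irr : irreflexive e.

Lemma upper_cut g F : good_neighbor_cut e g F ->
  exists F', good_neighbor_cut e g F' /\ #|F'| <= #|T| - 2 * g - 2.
Proof.
case/andP => /forallP good /existsP[x /existsP[y /and3P[xF yF nxy]]].
set D := del_rel e F.
have symD : symmetric D.
  by move=> a b; rewrite /D /del_rel sym andbCA.
have csym := sym_connect_sym symD.
pose C z := [set w | (w \notin F) && connect D z w].
have CnF : forall z w, w \in C z -> w \notin F.
  by move=> z w; rewrite inE => /andP[].
have sub : forall z v, v \in C z -> nbhd e v :&: ~: F \subset C z :\ v.
  move=> z v; rewrite inE => /andP[vF zv]; apply/subsetP => u.
  rewrite !inE => /andP[evu uF]; rewrite uF /=.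
  apply/andP; split.
    by apply/negP => /eqP uv; rewrite uv irr in evu.
  apply: connect_trans zv _; apply: connect1; by rewrite /D /del_rel vF uF.
have zC : forall z, z \notin F -> z \in C z.
  by move=> z zF; rewrite inE zF connect0.
have cardC : forall z, z \notin F -> g.+1 <= #|C z|.
  move=> z zF; have := good z; rewrite zF /= => gz.
  rewrite (cardsD1 z) zC //= add1n ltnS.
  exact: leq_trans gz (subset_leq_card (sub z z (zC z zF))).
have disj : C x :&: C y = set0.
  apply/setP => w; rewrite !inE; apply/negP => /andP[/andP[_ xw] /andP[_ yw]].
  by move/negP: nxy; apply; apply: connect_trans xw _; rewrite csym.
exists (~: (C x :|: C y)); split.
  apply/andP; split.
    apply/forallP => v; apply/implyP; rewrite setCK in_setC negbK => vC.
    have vF : v \notin F by case/setUP: vC => /CnF.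
    apply: leq_trans (implyP (good v) vF) _; apply: subset_leq_card.
    apply/subsetP => u uN; rewrite inE (setIP uN).1 /=.
    case/setUP: vC => vC; have := subsetP (sub _ _ vC) u uN; rewrite inE => /andP[_ uC].
      by rewrite inE uC.
    by rewrite inE uC orbT.
  apply/existsP; exists x; apply/existsP; exists y.
  rewrite !in_setC !negbK !in_setU zC // zC // orbT /=.
  apply/negP => cxy; move/negP: nxy; apply.
  move: cxy; apply: connect_sub => a b.
  rewrite /del_rel !in_setC !negbK => /and3P[aC bC eab].
  apply: connect1; rewrite /D /del_rel eab.
  by case/setUP: aC => /CnF ->; case/setUP: bC => /CnF ->.
have cx := cardC x xF; have cy := cardC y yF.
have := cardsC (C x :|: C y); rewrite cardsU disj cards0.
lia.
Qed.

End Upper.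

Lemma disc_pos (T : finType) (e : rel T) (F : {set T}) :
  connected_graph e -> disconnected_after e F -> 0 < #|F|.
Proof.
move=> con /existsP[x /existsP[y /and3P[xF yF nxy]]].
rewrite lt0n cards_eq0; apply/negP => /eqP F0; move/negP: nxy; apply.
move: (con x y); apply: connect_sub => a b eab; apply: connect1.
by rewrite /del_rel F0 !inE eab.
Qed.

Definition e3 : rel 'I_3 := fun x y => ((x:nat).+1 == y) || ((y:nat).+1 == x).
Definition o0 : 'I_3 := @Ordinal 3 0 isT.
Definition o1 : 'I_3 := @Ordinal 3 1 isT.
Definition o2 : 'I_3 := @Ordinal 3 2 isT.
Definition F1 : {set 'I_3} := [set o1].

Lemma e3_simple : simple_graph e3.
Proof.
split; first by move=> x y; rewrite /e3 orbC.
by move=> [[|[|[|n]]] Hx].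
Qed.

Lemma e3_conn : connected_graph e3.
Proof.
have h : forall x, connect e3 o0 x.
  move=> [[|[|[|n]]] Hx] //.
  - by rewrite (_ : Ordinal Hx = o0) ?connect0 //; apply: val_inj.
  - by apply: connect1; rewrite (_ : Ordinal Hx = o1) //; apply: val_inj.
  - apply: connect_trans (connect1 (_ : e3 o0 o1)) _ => //.
    by apply: connect1; rewrite (_ : Ordinal Hx = o2) //; apply: val_inj.
move=> x y; apply: connect_trans (h y).
by rewrite (sym_connect_sym (proj1 e3_simple)).
Qed.

Lemma F1_cut : good_neighbor_cut e3 0 F1.
Proof.
apply/andP; split; first by apply/forallP => v; apply/implyP.
apply/existsP; exists o0; apply/existsP; exists o2.
rewrite !inE /=; apply/negP => /connectP[p].
have : forall z : 'I_3, val z = 0 -> path (del_rel e3 F1) z p -> val (last z p) = 0.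
  elim: p => //= w p IH z z0 /andP[dzw pp]; apply: IH pp.
  move: dzw; rewrite /del_rel /e3 !inE z0 => /and3P[_ wo ew].
  case: w wo ew => m Hw wo ew.
  by case: m Hw wo ew => [|[|[|n]]].
move=> H pp l; have := H o0 erefl pp; by rewrite -l.
Qed.

Lemma e3_hyp : prop21_hyp e3 0.
Proof. split; [exact: e3_simple | exact: e3_conn | by [] | by exists F1; exact: F1_cut]. Qed.

Lemma e3_kappa : kappa e3 = 1.
Proof.
apply/eqP; rewrite eqn_leq; apply/andP; split.
  have := @bigmin_le _ (disconnected_after e3) (fun F => #|F|) (#|'I_3|.-1) F1.
  rewrite cards1; apply; exact: (andP F1_cut).2.
apply: bigmin_ge; first by rewrite card_ord.
by move=> F; apply: disc_pos; exact: e3_conn.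
Qed.

Lemma e3_kappag : kappa_g e3 0 = 1.
Proof.
apply/eqP; rewrite eqn_leq; apply/andP; split.
  have := @bigmin_le _ (good_neighbor_cut e3 0) (fun F => #|F|) (#|'I_3|) F1.
  rewrite cards1; apply; exact: F1_cut.
apply: bigmin_ge; first by rewrite card_ord.
by move=> F /andP[_]; apply: disc_pos; exact: e3_conn.
Qed.

Theorem proposition2p1 :
  (forall (T : finType) (e : rel T) (g : nat),
      prop21_hyp e g ->
      kappa e <= kappa_g e g <= #|T| - 2 * g - 2)
  /\ (exists (T : finType) (e : rel T) (g : nat),
        prop21_hyp e g /\ kappa e = kappa_g e g)
  /\ (exists (T : finType) (e : rel T) (g : nat),
        prop21_hyp e g /\ kappa_g e g = #|T| - 2 * g - 2).
Proof.
split; last split.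
- move=> T e g [[sym irr] con _ [F cut]]; apply/andP; split.
    apply: bigmin_ge.
      apply: leq_trans (leq_pred _).
      apply: (big_rec (fun m => m <= #|T|.-1)) => // a b _ hb.
      exact: leq_trans (geq_minr _ _) hb.
    move=> F' /andP[_ dF']; exact: bigmin_le.
  have [F' [cut' le']] := @upper_cut T e sym irr g F cut.
  exact: leq_trans (bigmin_le _ _ _ _ _ cut') le'.
- exists _, e3, 0; split; first exact: e3_hyp.
  by rewrite e3_kappa e3_kappag.
- exists _, e3, 0; split; first exact: e3_hyp.
  by rewrite e3_kappag card_ord.
Qed.
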